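(* Let $\alpha:U\to V$ be a transmission between supertropical monoids which is injective on the set $eU\setminus\{0\}$. (i) If $\alpha$ has trivial ghost kernel (i.e. $\mathfrak A_\alpha=eU$) and $V$ is a semiring, then $U$ is a semiring. (ii) If $\alpha$ is surjective and $U$ is a semiring, then $V$ is a semiring.
   Context: A bipotent semiring is a commutative monoid $(M,\cdot)$ with absorbing element $0$, equipped with a total order compatible with multiplication in which $0$ is least; addition is $\max$. A supertropical monoid is a monoid $(U,\cdot)$ with absorbing element $0$ and a distinguished central idempotent $e$ with $ex=0\Rightarrow x=0$, together with a total ordering on $M:=eU$ compatible with multiplication making $M$ a bipotent semiring. Define on $U$: $x+y:=y$ if $ex<ey$, $x$ if $ex>ey$, $ex$ if $ex=ey$; $U$ ''is a semiring'' if this addition is associative and multiplication distributes over it from both sides. A transmission $\alpha:U\to V$ between supertropical monoids is a map with $\alpha(0)=0$, $\alpha(1)=1$, $\alpha(xy)=\alpha(x)\alpha(y)$, $\alpha(e_U)=e_V$, and $x\le y\Rightarrow\alpha(x)\le\alpha(y)$ for $x,y\in eU$. Its ghost kernel is $\mathfrak A_\alpha:=\{x\in U:\alpha(x)\in eV\}$. *)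

(* Defs.v *)
From Stdlib Require Import Bool.


(* A supertropical monoid: a monoid (U,*,1) with absorbing 0, a distinguished
   central idempotent e with e x = 0 -> x = 0, and a (boolean, hence decidable)
   total order on M := eU compatible with multiplication, with 0 least, making
   M a bipotent semiring (in particular M is commutative).
   Membership in M = eU is expressed as  e * x = x. The order relation [st_le]
   is only constrained (and only ever used) on elements of M. *)
Record STMonoid := {
  st_car :> Type;
  st_mul : st_car -> st_car -> st_car;
  st_one : st_car;
  st_zero : st_car;
  st_e : st_car;
  st_le : st_car -> st_car -> bool;
  st_mulA : forall x y z, st_mul x (st_mul y z) = st_mul (st_mul x y) z;
  st_mul1l : forall x, st_mul st_one x = x;
  st_mul1r : forall x, st_mul x st_one = x;
  st_mul0l : forall x, st_mul st_zero x = st_zero;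
  st_mul0r : forall x, st_mul x st_zero = st_zero;
  st_e_idem : st_mul st_e st_e = st_e;
  st_e_central : forall x, st_mul st_e x = st_mul x st_e;
  st_e_faithful : forall x, st_mul st_e x = st_zero -> x = st_zero;
  st_M_comm : forall x y, st_mul st_e x = x -> st_mul st_e y = y ->
                st_mul x y = st_mul y x;
  st_le_refl : forall x, st_mul st_e x = x -> st_le x x = true;
  st_le_antisym : forall x y, st_mul st_e x = x -> st_mul st_e y = y ->
                st_le x y = true -> st_le y x = true -> x = y;
  st_le_trans : forall x y z, st_mul st_e x = x -> st_mul st_e y = y ->
                st_mul st_e z = z ->
                st_le x y = true -> st_le y z = true -> st_le x z = true;
  st_le_total : forall x y, st_mul st_e x = x -> st_mul st_e y = y ->
                st_le x y = true \/ st_le y x = true;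
  st_le_mul : forall x y z, st_mul st_e x = x -> st_mul st_e y = y ->
                st_mul st_e z = z ->
                st_le x y = true -> st_le (st_mul x z) (st_mul y z) = true;
  st_le0 : forall x, st_mul st_e x = x -> st_le st_zero x = true
}.

Section Ops.
Variable U : STMonoid.

Definition inM (x : U) : Prop := st_mul U (st_e U) x = x.

Definition st_lt (x y : U) : bool := st_le U x y && negb (st_le U y x).

Definition st_add (x y : U) : U :=
  let ex := st_mul U (st_e U) x in
  let ey := st_mul U (st_e U) y in
  if st_lt ex ey then y else if st_lt ey ex then x else ex.

Definition is_semiring : Prop :=
  (forall x y z : U, st_add x (st_add y z) = st_add (st_add x y) z) /\
  (forall x y z : U, st_mul U x (st_add y z) = st_add (st_mul U x y) (st_mul U x z)) /\
  (forall x y z : U, st_mul U (st_add x y) z = st_add (st_mul U x z) (st_mul U y z)).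
End Ops.

Definition is_transmission (U V : STMonoid) (a : U -> V) : Prop :=
  a (st_zero U) = st_zero V /\
  a (st_one U) = st_one V /\
  (forall x y : U, a (st_mul U x y) = st_mul V (a x) (a y)) /\
  a (st_e U) = st_e V /\
  (forall x y : U, inM U x -> inM U y -> st_le U x y = true -> st_le V (a x) (a y) = true).

Definition ghost_kernel (U V : STMonoid) (a : U -> V) : U -> Prop :=
  fun x => inM V (a x).

Definition trivial_ghost_kernel (U V : STMonoid) (a : U -> V) : Prop :=
  forall x : U, ghost_kernel U V a x <-> inM U x.

Definition inj_on_eU_nonzero (U V : STMonoid) (a : U -> V) : Prop :=
  forall x y : U, inM U x -> inM U y -> x <> st_zero U -> y <> st_zero U ->
    a x = a y -> x = y.

(* Main.v *)
Require Import Defs.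
From Stdlib Require Import Bool Classical.

Section H.
Variable U : STMonoid.
Local Notation m := (st_mul U).
Local Notation e := (st_e U).
Local Notation lt := (st_lt U).
Local Notation le := (st_le U).

Lemma ee x : m e (m e x) = m e x.
Proof. rewrite st_mulA, st_e_idem; reflexivity. Qed.

Lemma exy x y : m e (m x y) = m (m e x) (m e y).
Proof.
  assert (H : m (m e x) e = m e x).
  { rewrite <- st_mulA, <- st_e_central, st_mulA, st_e_idem; reflexivity. }
  rewrite (st_mulA U (m e x) e y), H, st_mulA; reflexivity.
Qed.

Lemma lt_irr a : lt a a = false.
Proof. unfold st_lt; destruct (le a a); reflexivity. Qed.

Lemma tri a b : inM U a -> inM U b ->
  (lt a b = true /\ lt b a = false) \/ a = b \/ (lt a b = false /\ lt b a = true).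
Proof.
  intros Ha Hb; unfold st_lt.
  destruct (le a b) eqn:E1, (le b a) eqn:E2; simpl; auto.
  - right; left; apply st_le_antisym; auto.
  - destruct (st_le_total U a b Ha Hb); congruence.
Qed.

Lemma lt_trans a b c : inM U a -> inM U b -> inM U c ->
  lt a b = true -> lt b c = true -> lt a c = true.
Proof.
  unfold st_lt; intros Ha Hb Hc H1 H2.
  apply andb_true_iff in H1; apply andb_true_iff in H2.
  destruct H1 as [H1 H1']; destruct H2 as [H2 H2'].
  apply negb_true_iff in H1'; apply negb_true_iff in H2'.
  rewrite (st_le_trans U a b c Ha Hb Hc H1 H2); simpl.
  destruct (le c a) eqn:E; auto.
  rewrite (st_le_trans U b c a Hb Hc Ha H2 E) in H1'; discriminate.
Qed.

Lemma lt_le a b : lt a b = true -> le a b = true.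
Proof. unfold st_lt; intro H; apply andb_true_iff in H; tauto. Qed.

Lemma le_not_lt a b : le a b = true -> lt b a = false.
Proof. unfold st_lt; intro H; rewrite H; destruct (le b a); reflexivity. Qed.

Lemma eM x : inM U (m e x).
Proof. apply ee. Qed.

Lemma mono_l x y z : le (m e y) (m e z) = true ->
  le (m e (m x y)) (m e (m x z)) = true.
Proof.
  intro H; rewrite !exy.
  rewrite (st_M_comm U (m e x) (m e y)), (st_M_comm U (m e x) (m e z)) by apply eM.
  apply st_le_mul; auto; apply eM.
Qed.

Lemma mono_r x y z : le (m e y) (m e z) = true ->
  le (m e (m y x)) (m e (m z x)) = true.
Proof.
  intro H; rewrite !exy; apply st_le_mul; auto; apply eM.
Qed.

Ltac fin_ord :=
  match goal with
  | H : lt ?a ?a = true |- _ => rewrite lt_irr in H; discriminate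
  | H1 : lt ?a ?b = true, H2 : lt ?b ?a = true |- _ =>
      apply lt_le in H1; rewrite (le_not_lt _ _ H1) in H2; discriminate
  | H1 : lt ?a ?b = true, H2 : lt ?b ?c = true, H3 : lt ?a ?c = false |- _ =>
      rewrite (lt_trans a b c (eM _) (eM _) (eM _) H1 H2) in H3; discriminate
  | H1 : lt ?a ?b = true, H2 : lt ?b ?c = true, H3 : lt ?c ?a = true |- _ =>
      rewrite (lt_trans a b c (eM _) (eM _) (eM _) H1 H2) in H3; discriminate
  end.

Lemma add_assoc x y z : st_add U x (st_add U y z) = st_add U (st_add U x y) z.
Proof.
  destruct (tri _ _ (eM x) (eM y)) as [[A1 A2]|[A|[A1 A2]]];
  destruct (tri _ _ (eM y) (eM z)) as [[B1 B2]|[B|[B1 B2]]];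
  destruct (tri _ _ (eM x) (eM z)) as [[C1 C2]|[C|[C1 C2]]];
  unfold st_add; cbv zeta;
  repeat first [ rewrite A1 | rewrite A2 | rewrite B1 | rewrite B2 | rewrite C1 | rewrite C2
               | rewrite A in * | rewrite B in * | rewrite C in *
               | rewrite ee | rewrite lt_irr | progress cbv iota ];
  try reflexivity; try fin_ord.
Qed.

Definition LC := forall x y z, lt (m e y) (m e z) = true ->
  m e (m x y) = m e (m x z) -> inM U (m x z).
Definition RC := forall x y z, lt (m e y) (m e z) = true ->
  m e (m y x) = m e (m z x) -> inM U (m z x).

Lemma add_lt x y : lt (m e x) (m e y) = true -> st_add U x y = y.
Proof. intro H; unfold st_add; cbv zeta; rewrite H; reflexivity. Qed.
Lemma add_gt x y : lt (m e y) (m e x) = true -> st_add U x y = x.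
Proof. intro H; unfold st_add; cbv zeta; rewrite H.
  apply lt_le, le_not_lt in H; rewrite H; reflexivity. Qed.
Lemma add_eq x y : m e x = m e y -> st_add U x y = m e x.
Proof. intro H; unfold st_add; cbv zeta; rewrite H, lt_irr; reflexivity. Qed.

Lemma semiring_LC : is_semiring U -> LC /\ RC.
Proof.
  intros [_ [Hl Hr]]; split.
  - intros x y z H1 H2. specialize (Hl x y z).
    rewrite (add_lt _ _ H1), (add_eq _ _ H2) in Hl. unfold inM; rewrite <- H2; auto.
  - intros x y z H1 H2. specialize (Hr y z x).
    rewrite (add_lt _ _ H1), (add_eq _ _ H2) in Hr. unfold inM; rewrite <- H2; auto.
Qed.

Lemma exe x : m x e = m e x.
Proof. symmetry; apply st_e_central. Qed.

Lemma LC_semiring : LC -> RC -> is_semiring U.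
Proof.
  intros HL HR; split; [exact add_assoc|split].
  - intros x y z.
    destruct (tri _ _ (eM y) (eM z)) as [[B1 B2]|[B|[B1 B2]]].
    + rewrite (add_lt _ _ B1).
      assert (Hle := mono_l x y z (lt_le _ _ B1)).
      destruct (tri _ _ (eM (m x y)) (eM (m x z))) as [[C1 C2]|[C|[C1 C2]]].
      * rewrite (add_lt _ _ C1); reflexivity.
      * rewrite (add_eq _ _ C), C; symmetry; apply (HL x y z B1 C).
      * rewrite (le_not_lt _ _ Hle) in C2; discriminate.
    + rewrite (add_eq _ _ B).
      assert (C : m e (m x y) = m e (m x z)) by (rewrite !exy, B; reflexivity).
      rewrite (add_eq _ _ C), !st_mulA, exe; reflexivity.
    + rewrite (add_gt _ _ B2).
      assert (Hle := mono_l x z y (lt_le _ _ B2)).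
      destruct (tri _ _ (eM (m x y)) (eM (m x z))) as [[C1 C2]|[C|[C1 C2]]].
      * rewrite (le_not_lt _ _ Hle) in C1; discriminate.
      * rewrite (add_eq _ _ C); symmetry; apply (HL x z y B2 (eq_sym C)).
      * rewrite (add_gt _ _ C2); reflexivity.
  - intros y z x.
    destruct (tri _ _ (eM y) (eM z)) as [[B1 B2]|[B|[B1 B2]]].
    + rewrite (add_lt _ _ B1).
      assert (Hle := mono_r x y z (lt_le _ _ B1)).
      destruct (tri _ _ (eM (m y x)) (eM (m z x))) as [[C1 C2]|[C|[C1 C2]]].
      * rewrite (add_lt _ _ C1); reflexivity.
      * rewrite (add_eq _ _ C), C; symmetry; apply (HR x y z B1 C).
      * rewrite (le_not_lt _ _ Hle) in C2; discriminate.
    + rewrite (add_eq _ _ B).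
      assert (C : m e (m y x) = m e (m z x)) by (rewrite !exy, B; reflexivity).
      rewrite (add_eq _ _ C), !st_mulA; reflexivity.
    + rewrite (add_gt _ _ B2).
      assert (Hle := mono_r x z y (lt_le _ _ B2)).
      destruct (tri _ _ (eM (m y x)) (eM (m z x))) as [[C1 C2]|[C|[C1 C2]]].
      * rewrite (le_not_lt _ _ Hle) in C1; discriminate.
      * rewrite (add_eq _ _ C); symmetry; apply (HR x z y B2 (eq_sym C)).
      * rewrite (add_gt _ _ C2); reflexivity.
Qed.

End H.

Section T.
Variables U V : STMonoid.
Variable a : U -> V.
Hypothesis Ht : is_transmission U V a.
Hypothesis Hi : inj_on_eU_nonzero U V a.

Lemma ae x : a (st_mul U (st_e U) x) = st_mul V (st_e V) (a x).
Proof. destruct Ht as [_ [_ [Hm [He _]]]]. rewrite Hm, He; reflexivity. Qed.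

Lemma a0 : a (st_zero U) = st_zero V.
Proof. destruct Ht; auto. Qed.

Lemma aM x y : a (st_mul U x y) = st_mul V (a x) (a y).
Proof. destruct Ht as [_ [_ [Hm _]]]; auto. Qed.

Lemma amono x y : inM U x -> inM U y -> st_le U x y = true -> st_le V (a x) (a y) = true.
Proof. destruct Ht as [_ [_ [_ [_ H]]]]; auto. Qed.

Lemma inM0 (W : STMonoid) : inM W (st_zero W).
Proof. apply st_mul0r. Qed.

Lemma lt_pull y z : st_lt U (st_mul U (st_e U) y) (st_mul U (st_e U) z) = true ->
  st_lt V (st_mul V (st_e V) (a y)) (st_mul V (st_e V) (a z)) = true \/ a z = st_zero V.
Proof.
  intro H.
  assert (Hle := amono _ _ (eM U y) (eM U z) (lt_le U _ _ H)). rewrite !ae in Hle.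
  unfold st_lt at 1; rewrite Hle; simpl.
  destruct (st_le V (st_mul V (st_e V) (a z)) (st_mul V (st_e V) (a y))) eqn:E; [|left; reflexivity].
  right.
  assert (Eq := st_le_antisym V _ _ (eM V _) (eM V _) Hle E).
  rewrite <- !ae in Eq.
  destruct (classic (st_mul U (st_e U) y = st_zero U)) as [Hy|Hy].
  - rewrite Hy, a0 in Eq. apply st_e_faithful. rewrite <- ae, <- Eq; reflexivity.
  - assert (Hz : st_mul U (st_e U) z <> st_zero U).
    { intro Hz. apply Hy. apply st_le_antisym; try apply eM; try apply inM0.
      - rewrite <- Hz; apply lt_le, H.
      - apply st_le0, eM. }
    assert (Eq' := Hi _ _ (eM U _) (eM U _) Hy Hz Eq).
    rewrite Eq', lt_irr in H; discriminate.
Qed.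

Lemma lt_push y z :
  st_lt V (st_mul V (st_e V) (a y)) (st_mul V (st_e V) (a z)) = true ->
  st_lt U (st_mul U (st_e U) y) (st_mul U (st_e U) z) = true.
Proof.
  intro H; rewrite <- !ae in H.
  destruct (tri U _ _ (eM U y) (eM U z)) as [[C1 C2]|[C|[C1 C2]]]; auto.
  - rewrite C, lt_irr in H; discriminate.
  - assert (Hle := amono _ _ (eM U _) (eM U _) (lt_le U _ _ C2)).
    rewrite (le_not_lt V _ _ Hle) in H; discriminate.
Qed.

Lemma part1 : trivial_ghost_kernel U V a -> is_semiring V -> is_semiring U.
Proof.
  intros Hk HV. destruct (semiring_LC V HV) as [HL HR].
  apply LC_semiring.
  - intros x y z H1 H2. apply Hk. unfold ghost_kernel.
    destruct (lt_pull y z H1) as [H|H].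
    + rewrite aM. apply (HL (a x) (a y) (a z) H).
      rewrite <- !aM, <- !ae, H2; reflexivity.
    + rewrite aM, H, st_mul0r; apply inM0.
  - intros x y z H1 H2. apply Hk. unfold ghost_kernel.
    destruct (lt_pull y z H1) as [H|H].
    + rewrite aM. apply (HR (a x) (a y) (a z) H).
      rewrite <- !aM, <- !ae, H2; reflexivity.
    + rewrite aM, H, st_mul0l; apply inM0.
Qed.

Lemma part2 : (forall v : V, exists u : U, a u = v) -> is_semiring U -> is_semiring V.
Proof.
  intros Hs HU. destruct (semiring_LC U HU) as [HL HR].
  apply LC_semiring.
  - intros v1 v2 v3 H1 H2.
    destruct (Hs v1) as [x <-]; destruct (Hs v2) as [y <-]; destruct (Hs v3) as [z <-].
    destruct (classic (st_mul V (st_e V) (st_mul V (a x) (a z)) = st_zero V)) as [Z|Z].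
    + rewrite (st_e_faithful V _ Z); apply inM0.
    + rewrite <- !aM, <- !ae in H2. rewrite <- aM, <- ae in Z.
      assert (Hz : st_mul U (st_e U) (st_mul U x z) <> st_zero U)
        by (intro E; apply Z; rewrite E; apply a0).
      assert (Hy : st_mul U (st_e U) (st_mul U x y) <> st_zero U)
        by (intro E; apply Z; rewrite <- H2, E; apply a0).
      assert (E := Hi _ _ (eM U _) (eM U _) Hy Hz H2).
      assert (M := HL x y z (lt_push y z H1) E).
      unfold inM; rewrite <- aM, <- ae, M; reflexivity.
  - intros v1 v2 v3 H1 H2.
    destruct (Hs v1) as [x <-]; destruct (Hs v2) as [y <-]; destruct (Hs v3) as [z <-].
    destruct (classic (st_mul V (st_e V) (st_mul V (a z) (a x)) = st_zero V)) as [Z|Z].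
    + rewrite (st_e_faithful V _ Z); apply inM0.
    + rewrite <- !aM, <- !ae in H2. rewrite <- aM, <- ae in Z.
      assert (Hz : st_mul U (st_e U) (st_mul U z x) <> st_zero U)
        by (intro E; apply Z; rewrite E; apply a0).
      assert (Hy : st_mul U (st_e U) (st_mul U y x) <> st_zero U)
        by (intro E; apply Z; rewrite <- H2, E; apply a0).
      assert (E := Hi _ _ (eM U _) (eM U _) Hy Hz H2).
      assert (M := HR x y z (lt_push y z H1) E).
      unfold inM; rewrite <- aM, <- ae, M; reflexivity.
Qed.
End T.

Theorem theorem1p5 (U V : STMonoid) (a : U -> V) :
  is_transmission U V a -> inj_on_eU_nonzero U V a ->
  ((trivial_ghost_kernel U V a -> is_semiring V -> is_semiring U) /\
   ((forall v : V, exists u : U, a u = v) -> is_semiring U -> is_semiring V)).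
Proof.
  intros Ht Hi; split; [apply part1 | apply part2]; auto.
Qed.
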